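(* Let $D$ be a period domain for polarized Hodge structures of weight $4$, $F\in D$, and $E\subset\mathfrak g^{-1,1}$ an integral element of the infinitesimal period relation at $F$ (i.e. an abelian subspace). Let $\zeta\in H_{\mathbb R}\cap H^{2,2}_F$, let $E_\zeta=\{\varphi\in E:\varphi(\zeta)=0\text{ in }H^{1,3}\}$, and let $$\sigma_\zeta=\dim\,\mathrm{Image}\{E_\zeta\otimes H^{4,0}\to H^{3,1},\ \varphi\otimes\omega\mapsto\varphi(\omega)\}.$$ Then $\mathrm{codim}_E E_\zeta\le h^{1,3}-\sigma_\zeta$.
   Context: $H$ is a finite-dimensional $\mathbb Q$-vector space with non-degenerate symmetric bilinear form $Q$; a polarized Hodge structure of weight 4 is $H_{\mathbb C}=\bigoplus_{p+q=4}H^{p,q}$, $\overline{H^{p,q}}=H^{q,p}$, $F^p=\bigoplus_{p'\ge p}H^{p',4-p'}$, $Q(F^p,F^{5-p})=0$, $Q(Cu,\bar u)>0$ for $u\neq 0$ ($C=i^{p-q}$ on $H^{p,q}$); $D$ is the period domain of such structures with fixed Hodge numbers $h^{p,q}$. $\mathfrak g$ is the Lie algebra of $\mathrm{Aut}(H,Q)$ and $\mathfrak g^{-1,1}=\{X\in\mathfrak g_{\mathbb C}:X(H^{p,q})\subset H^{p-1,q+1}\ \forall p,q\}$; it is the fibre at $F$ of the horizontal distribution whose annihilator $I$ is the infinitesimal period relation. Integral elements of $I$ at $F$ are the subspaces $E\subset\mathfrak g^{-1,1}$ with $[\varphi,\psi]=0$ for all $\varphi,\psi\in E$. $E_\zeta$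 is the intersection of $E$ with the tangent space at $F$ of the Noether–Lefschetz locus $D_\zeta=\{F'\in D:\zeta\in H^{2,2}_{F'}\}$. *)

(* Defs.v *)
(* Vectors of H_C = C^n are row vectors, and an endomorphism X
   acts on the right:  phi_X(u) := u *m X. *)
From mathcomp Require Import all_boot all_order all_algebra.
From mathcomp Require Import complex Rstruct.
Set Implicit Arguments. Unset Strict Implicit. Unset Printing Implicit Defensive.
Import Order.TTheory GRing.Theory Num.Theory.
Local Open Scope ring_scope.

Definition CC : Type := complex Rdefinitions.R.

Section Hodge.
Variable n : nat.

Definition Qc (Qm : 'M[rat]_n) : 'M[CC]_n := map_mx ratr Qm.
Definition bil (Qm : 'M[rat]_n) (u v : 'rV[CC]_n) : CC := (u *m Qc Qm *m v^T) 0 0.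

Definition vconj (u : 'rV[CC]_n) : 'rV[CC]_n := map_mx (fun x => x^*) u.

(* H p stands for H^{p,4-p}, p = 0..4.  Hz extends the indexing to all
   integers p, with H^{p,4-p} = 0 for p outside [0,4]. *)
Definition Hz (H : 'I_5 -> {vspace 'rV[CC]_n}) (p : int) : {vspace 'rV[CC]_n} :=
  match p with
  | Posz k => if (k < 5)%N then H (inord k) else 0%VS
  | Negz _ => 0%VS
  end.

Definition Fil (H : 'I_5 -> {vspace 'rV[CC]_n}) (p : nat) : {vspace 'rV[CC]_n} :=
  (\sum_(i < 5 | (p <= i)%N) H i)%VS.

Definition is_Weil (H : 'I_5 -> {vspace 'rV[CC]_n}) (W : 'M[CC]_n) : Prop :=
  forall (p : 'I_5) u, u \in H p ->
    u *m W = ('i ^ ((p : nat)%:Z - (4 - p : nat)%:Z)) *: u.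

Definition is_PHS4 (Qm : 'M[rat]_n) (H : 'I_5 -> {vspace 'rV[CC]_n}) : Prop :=
  [/\ (Qm^T = Qm /\ Qm \in unitmx),
      (directv (\sum_(i < 5) H i) /\ (\sum_(i < 5) H i)%VS = fullv),
      (forall (p : 'I_5) u, (vconj u \in H p) = (u \in H (rev_ord p))),
      (forall (p : nat) u v, u \in Fil H p -> v \in Fil H (5 - p) -> bil Qm u v = 0) &
      (forall W, is_Weil H W -> forall u, u != 0 -> 0 < bil Qm (u *m W) (vconj u))].

Definition in_g_m11 (Qm : 'M[rat]_n) (H : 'I_5 -> {vspace 'rV[CC]_n}) (X : 'M[CC]_n) : Prop :=
  (forall u v, bil Qm (u *m X) v + bil Qm u (v *m X) = 0) /\
  (forall (p : int) u, u \in Hz H p -> u *m X \in Hz H (p - 1)).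

Definition integral_element (Qm : 'M[rat]_n) (H : 'I_5 -> {vspace 'rV[CC]_n})
    (E : {vspace 'M[CC]_n}) : Prop :=
  (forall X, X \in E -> in_g_m11 Qm H X) /\
  (forall X Y, X \in E -> Y \in E -> X *m Y - Y *m X = 0).

Definition Ezeta (E : {vspace 'M[CC]_n}) (zeta : 'rV[CC]_n) : {vspace 'M[CC]_n} :=
  (E :&: lker (linfun (fun X : 'M[CC]_n => zeta *m X)))%VS.

(* Image of the multiplication map  E' (x) W -> H_C,  phi (x) w |-> phi(w):
   the span of the images of the tensors of basis vectors. *)
Definition mult_image (E' : {vspace 'M[CC]_n}) (W : {vspace 'rV[CC]_n}) : {vspace 'rV[CC]_n} :=
  (<<[seq w *m X | X <- (vbasis E' : seq _), w <- (vbasis W : seq _)]>>)%VS.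

Definition sigma (E : {vspace 'M[CC]_n}) (H : 'I_5 -> {vspace 'rV[CC]_n}) (zeta : 'rV[CC]_n) : nat :=
  \dim (mult_image (Ezeta E zeta) (H (inord 4))).

End Hodge.

(* Main.v *)
Require Import Defs.
From mathcomp Require Import all_boot all_order all_algebra.
From mathcomp Require Import complex Rstruct.
Import Order.TTheory GRing.Theory Num.Theory.
Local Open Scope ring_scope.
From mathcomp Require Import zify.
Lemma mx11_eq0 (A : 'M[CC]_1) : (A == 0) = (A 0 0 == 0).
Proof.
apply/eqP/eqP => [->|h]; first by rewrite mxE.
by rewrite [A]mx11_scalar h; apply/matrixP => i j; rewrite !mxE mul0rn.
Qed.

Section S.
Variables (n : nat) (Qm : 'M[rat]_n).

Lemma bil_kerR m u :
  (u \in lker (linfun (mulmxr (trmx (m *m Qc Qm))))) = (bil Qm m u == 0).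
Proof.
rewrite memv_ker lfunE /= /bil -[u in u *m _]trmxK -trmx_mul trmx_eq0.
by rewrite mx11_eq0.
Qed.

Lemma bil_kerL m v :
  (m \in lker (linfun (mulmxr (Qc Qm *m v^T)))) = (bil Qm m v == 0).
Proof. by rewrite memv_ker lfunE /= /bil mulmxA mx11_eq0. Qed.

Lemma bil_conj m u : bil Qm (vconj m) (vconj u) = (bil Qm m u)^*.
Proof.
rewrite /bil /vconj map_trmx.
have hQ : map_mx Num.conj (Qc Qm) = Qc Qm.
  by apply/matrixP => i j; rewrite !mxE fmorph_rat.
by rewrite -{1}hQ -!map_mxM mxE.
Qed.

Lemma bil0r m : bil Qm m 0 = 0.
Proof. by rewrite /bil trmx0 mulmx0 mxE. Qed.

Lemma bilNl u v : bil Qm u v = - bil Qm v u -> True. Proof. by []. Qed.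

Lemma nondeg m : Qm \in unitmx -> (forall u, bil Qm m u = 0) -> m = 0.
Proof.
move=> Qu h.
have hQ : m *m Qc Qm = 0.
  apply/rowP => j; rewrite [RHS]mxE.
  have := h (delta_mx 0 j); rewrite /bil trmx_delta mxE (bigD1 j) //= !mxE !eqxx mulr1.
  rewrite [X in _ + X]big1 ?addr0 // => k kj; by rewrite [delta_mx _ _ _ _]mxE (negbTE kj) mulr0.
have Qcu : Qc Qm \in unitmx by rewrite /Qc map_unitmx.
by rewrite -[m]mulmx1 -(mulmxV Qcu) mulmxA hQ mul0mx.
Qed.

Lemma memFil (H : 'I_5 -> {vspace 'rV[CC]_n}) (p : nat) (i : 'I_5) u :
  (p <= i)%N -> u \in H i -> u \in Fil H p.
Proof. by move=> pi; apply/subvP; apply: (sumv_sup i) => //; exact: subvv. Qed.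

Lemma orth3 (H : 'I_5 -> {vspace 'rV[CC]_n}) (i : 'I_5) m u :
  is_PHS4 Qm H -> i != inord 1 -> u \in H i -> m \in H (inord 3) -> bil Qm m u = 0.
Proof.
move=> [_ _ hconj hFil _] i1 uH mH.
case: (leqP 2 i) => hi.
  apply: (hFil 3%N); first by apply: (memFil H 3 (inord 3)) => //; rewrite inordK.
  exact: (memFil H 2 i).
have i0 : rev_ord (inord 4 : 'I_5) = i.
  apply/val_inj => /=; rewrite inordK //.
  move: i1 hi; rewrite -(inj_eq val_inj) /= inordK //.
  by case: (val i) => [|[|k]].
have m1 : vconj m \in H (inord 1).
  rewrite hconj; have -> : rev_ord (inord 1 : 'I_5) = inord 3 by apply/val_inj; rewrite /= !inordK.
  done.
have u4 : vconj u \in H (inord 4) by rewrite hconj i0.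
have := hFil 1%N _ _ (memFil H 1 (inord 1) _ _ m1) (memFil H 4 (inord 4) _ _ u4).
rewrite bil_conj !inordK // => /(_ isT isT) /eqP.
by rewrite conjC_eq0 => /eqP.
Qed.

End S.

Theorem proposition5p7 (n : nat) (Qm : 'M[rat]_n)
    (H : 'I_5 -> {vspace 'rV[CC]_n}) (E : {vspace 'M[CC]_n}) (zeta : 'rV[CC]_n) :
  is_PHS4 Qm H ->
  integral_element Qm H E ->
  vconj zeta = zeta ->
  zeta \in H (inord 2) ->
  ((\dim E)%:Z - (\dim (Ezeta E zeta))%:Z
     <= (\dim (H (inord 1)))%:Z - (sigma E H zeta)%:Z)%R.
Proof.
move=> hPHS hint _ hz.
have [[QmT Qu] [dirH sumH] hconj hFil _] := hPHS.
have [hE hcomm] := hint.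
set L := linfun (fun X : 'M[CC]_n => zeta *m X).
set V := (L @: E)%VS.
have dimEV : (\dim (Ezeta E zeta) + \dim V = \dim E)%N := limg_ker_dim L E.
have hmov : forall X p u, X \in E -> u \in Hz H p -> u *m X \in Hz H (p - 1).
  by move=> X p u XE; have [_ h] := hE X XE; exact: h.
have VH1 : (V <= H (inord 1))%VS.
  apply/subvP => v /memv_imgP [X XE ->]; rewrite lfunE /=.
  have := hmov X (Posz 2) zeta XE; rewrite /Hz /=; apply.
  exact: hz.
set M := mult_image (Ezeta E zeta) (H (inord 4)).
have inEz : forall Y, Y \in Ezeta E zeta -> Y \in E /\ zeta *m Y = 0.
  move=> Y /memv_capP [YE]; rewrite memv_ker lfunE /= => /eqP; done.
have MH3 : (M <= H (inord 3))%VS.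
  apply/span_subvP => x /allpairsP [[Y w] [/= Yb wb ->]].
  have [YE _] := inEz Y (vbasis_mem Yb).
  have := hmov Y (Posz 4) w YE; rewrite /Hz /=; apply.
  exact: vbasis_mem wb.
have orthVM : forall m v, m \in M -> v \in V -> bil Qm m v = 0.
  move=> m v mM /memv_imgP [X XE ->]; rewrite lfunE /=.
  apply/eqP; rewrite -bil_kerL; move: m mM; apply/subvP.
  apply/span_subvP => x /allpairsP [[Y w] [/= Yb wb ->]].
  rewrite bil_kerL.
  have [YE zY] := inEz Y (vbasis_mem Yb).
  have [hQY _] := hE Y YE.
  have XY : X *m Y = Y *m X by apply/eqP; rewrite -subr_eq0; apply/eqP; exact: hcomm.
  have := hQY w (zeta *m X).
  by rewrite -mulmxA XY mulmxA zY mul0mx bil0r addr0 => ->.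
set W := (H (inord 1) :\: V)%VS.
have H1eq : (W + V)%VS = H (inord 1) by rewrite addv_diff; apply/addv_idPl.
have dimW : (\dim W + \dim V = \dim (H (inord 1)))%N.
  by rewrite -dimv_disjoint_sum ?capv_diff // H1eq.
set k := \dim W.
set b := vbasis W.
set G : 'M[CC]_(n, k) := Qc Qm *m (\matrix_(i < k) tnth b i)^T.
pose g : 'Hom('rV[CC]_n, 'rV[CC]_k) := linfun (mulmxr G).
have gE : forall m i, (m *m G) 0 i = bil Qm m (tnth b i).
  move=> m i; rewrite /G /bil mulmxA !mxE; apply: eq_bigr => j _; rewrite !mxE.
  done.
have ginj : (M :&: lker g = 0)%VS.
  apply/eqP; rewrite -subv0; apply/subvP => m /memv_capP [mM].
  rewrite memv_ker lfunE /= => /eqP gm0; rewrite memv0; apply/eqP.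
  apply: (nondeg n Qm m Qu) => u.
  have uS : u \in (\sum_(i < 5) H i)%VS by rewrite sumH memvf.
  have : ((\sum_(i < 5) H i) <= lker (linfun (mulmxr (m *m Qc Qm)^T)))%VS.
    apply/subv_sumP => i _.
    case: (eqVneq i (inord 1)) => [->|i1].
      rewrite -H1eq subv_add; apply/andP; split.
        rewrite -(span_basis (vbasisP W)); apply/span_subvP => w /tnthP [i0 ->].
        by rewrite bil_kerR -gE gm0 mxE.
      by apply/subvP => v vV; rewrite bil_kerR orthVM.
    apply/subvP => v vH; rewrite bil_kerR; apply/eqP.
    by apply: (orth3 n Qm H i m v hPHS i1 vH); apply: (subvP MH3).
  by move/subvP/(_ u uS); rewrite bil_kerR => /eqP.
have dimM : \dim (g @: M) = \dim M := limg_dim_eq ginj.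
have dimgM : (\dim (g @: M) <= k)%N.
  by have := dimvS (subvf (g @: M)); rewrite dimvf /dim /= mul1n.
rewrite /sigma -/M.
lia.
Qed.
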